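(* Let $G=(V,E)$ and $H=(U,F)$ be finite simple graphs, each with $n$ vertices, and suppose the uniqueness trees $T(v)$, $v\in V\cup U$, have been constructed as in the context. Then the tree comparison stage of the uniqueness tree algorithm (described in the context) runs in time $O(n^7)$ in the worst case.
   Context: A simple graph is a finite, unweighted, undirected graph with no loops or multiple edges; the size $n$ of a graph is its number of vertices. Uniqueness trees: for each vertex $v$ of a graph, $T(v)$ is the rooted tree with node labels in the vertex set built level by level: level $0$ is the root labelled $v$; a node on the current level is unique if its label occurs exactly once among the labels on that level; non-unique nodes are leaves; each unique node labelled $u$ receives one child labelled $w$ for each neighbour $w$ of $u$; this continues while some node on the current level is unique and the height of $T(v)$ is less than $n$. Tree comparison stage: initially no vertex is mapped. For each unmapped $v\in V$ and, in turn, each unmapped $u\in U$, declare $v$ and $u$ equivalent unless one of the following holds: the heights of $T(v)$ and $T(u)$ differ; for some level, the numbers of nodes on that level of $T(v)$ and $T(u)$ differ; for some level and some $i\in\{1,\dots,n-1\}$, the number of nodes on that level having exactly $i$ children differs between $T(v)$ and $T(u)$. If $v$ and $u$ are equivalent, mark both as mapped. At the end, output ''$G\cong H$'' if all vertices of $V$ and $U$ have been mapped, and ''$G\not\cong H$'' otherwise. *)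

(* Defs.v *)
From mathcomp Require Import all_boot.
Set Implicit Arguments. Unset Strict Implicit. Unset Printing Implicit Defensive.

Section UTree.
Variables (T : finType) (e : rel T).

Definition nbrs (x : T) : seq T := [seq y <- enum T | e x y].

(* a node labelled x on level L is unique iff x occurs exactly once in L *)
Definition uniq_on (L : seq T) (x : T) : bool := count_mem x L == 1.

(* labels of the next level: each unique node u gets one child per neighbour *)
Definition next_level (L : seq T) : seq T :=
  flatten [seq (if uniq_on L x then nbrs x else [::]) | x <- L].

Definition nchildren (L : seq T) (x : T) : nat :=
  if uniq_on L x then size (nbrs x) else 0.

(* The tree, represented level by level; each level is the list of its nodes,
   each node given by its number of children.  [fuel] is the number of
   further levels that may still be added (the height must stay <= n). *)
Fixpoint build (fuel : nat) (L : seq T) : seq (seq nat) :=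
  match fuel with
  | 0 => [:: [seq 0 | _ <- L]]
  | k.+1 =>
      let L' := next_level L in
      if has (uniq_on L) L && (L' != [::])
      then [seq nchildren L x | x <- L] :: build k L'
      else [:: [seq 0 | _ <- L]]
  end.

(* T(v): level 0 is the root v; construction continues while some node of
   the current level is unique and the height is less than n = #|T|. *)
Definition utree (v : T) : seq (seq nat) := build #|T| [:: v].

End UTree.

Definition tequiv (n : nat) (t1 t2 : seq (seq nat)) : bool :=
  (size t1 == size t2) &&
  all2 (fun l1 l2 => (size l1 == size l2) &&
          all (fun i => count_mem i l1 == count_mem i l2) (iota 1 n.-1)) t1 t2.

(* traversing a level and counting, for each node, its children *)
Definition scan_cost (l : seq nat) : nat := \sum_(k <- l) k.+1.
(* computing the size of a level, and, for each i in 1..n-1, the number of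
   nodes of the level having exactly i children *)
Definition level_cost (n : nat) (l : seq nat) : nat :=
  (size l).+1 + n.-1 * scan_cost l.
(* one comparison of T(v) with T(u): heights, then all levels of both trees *)
Definition cmp_cost (n : nat) (t1 t2 : seq (seq nat)) : nat :=
  (size t1).+1 + (size t2).+1 +
  \sum_(l <- t1) level_cost n l + \sum_(l <- t2) level_cost n l.

(* The state is (mapped vertices of U, cost).
   For each v of V in turn, and for each u of U in turn, one step is spent;
   if v is still unmapped and u is unmapped, T(v) and T(u) are compared
   (cost cmp_cost) and, if equivalent, both become mapped.  Finally checking
   that all vertices are mapped costs #|V| + #|U|. *)
Section Compare.
Variables (V U : finType) (eG : rel V) (eH : rel U).

Definition inner_step (n : nat) (v : V) (st : bool * seq U * nat) (u : U)
    : bool * seq U * nat :=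
  let: (vm, mU, c) := st in
  let c1 := c.+1 in
  if ~~ vm && (u \notin mU) then
    let c2 := c1 + cmp_cost n (utree eG v) (utree eH u) in
    if tequiv n (utree eG v) (utree eH u) then (true, u :: mU, c2)
    else (false, mU, c2)
  else (vm, mU, c1).

Definition outer_step (n : nat) (st : seq U * nat) (v : V) : seq U * nat :=
  let: (mU, c) := st in
  let: (_, mU', c') := foldl (inner_step n v) (false, mU, c) (enum U) in
  (mU', c').

Definition comparison_stage_cost : nat :=
  let n := #|V| in
  (foldl (outer_step n) ([::], 0) (enum V)).2 + #|V| + #|U|.

End Compare.

(* Main.v *)
Require Import Defs.
From mathcomp Require Import all_boot zify ring.
Set Implicit Arguments. Unset Strict Implicit.

Section Bounds.
Variables (T : finType) (e : rel T).

Lemma size_nbrs x : size (nbrs e x) <= #|T|.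
Proof. by rewrite /nbrs size_filter cardE count_size. Qed.

Lemma uniq_filter_uniq_on (L : seq T) : uniq (filter (uniq_on L) L).
Proof.
apply: count_mem_uniq => x; rewrite count_filter mem_filter.
case Hx: (uniq_on L x) => /=.
  have -> : count (predI (pred1 x) (uniq_on L)) L = count_mem x L.
    by apply: eq_count => y /=; case: eqP => // ->; rewrite Hx.
  move: Hx; rewrite /uniq_on => /eqP Hc; rewrite Hc.
  have : x \in L by rewrite -has_pred1 has_count Hc.
  by move=> ->.
rewrite (@eq_count _ _ pred0) ?count_pred0 // => y /=.
by case: eqP => // ->; rewrite Hx.
Qed.

Lemma count_uniq_on_le (L : seq T) : count (uniq_on L) L <= #|T|.
Proof.
rewrite -size_filter -(card_uniqP (uniq_filter_uniq_on L)).
exact: max_card.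
Qed.

Lemma size_next_level (L : seq T) : size (next_level e L) <= #|T| * #|T|.
Proof.
rewrite /next_level size_flatten /shape -map_comp.
have H : forall s : seq T, sumn [seq (size \o (fun x => if uniq_on L x then nbrs e x else [::])) x | x <- s]
   <= count (uniq_on L) s * #|T|.
  elim=> [|x s IH] //=; case: (uniq_on L x) => /=.
    by rewrite mulSn leq_add // size_nbrs.
  by rewrite add0n.
apply: leq_trans (H L) _; rewrite leq_mul2r count_uniq_on_le orbT //.
Qed.

Definition goodlev (S : nat) (l : seq nat) := (size l <= S) && all (fun k => k <= #|T|) l.

Lemma build_bound S fuel (L : seq T) : #|T| * #|T| <= S -> size L <= S ->
  size (build e fuel L) <= fuel.+1 /\ all (goodlev S) (build e fuel L).
Proof.
move=> HS.
move: L; have Z : forall L0 : seq T, all (fun k => k <= #|T|) [seq 0 | _ <- L0].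
  by move=> L0; apply/allP => x /mapP [? _ ->].
elim: fuel => [|k IH] L HL /=.
  by rewrite /goodlev size_map HL Z.
case: ifP => _ /=.
  have [H1 H2] := IH _ (leq_trans (size_next_level L) HS).
  split; first by [].
  rewrite H2 andbT /goodlev size_map HL /=.
  apply/allP => y /mapP [x _ ->]; rewrite /nchildren; case: ifP => // _; exact: size_nbrs.
by rewrite /goodlev size_map HL Z.
Qed.

End Bounds.

Lemma scan_le m (l : seq nat) : all (fun k => k <= m) l -> scan_cost l <= size l * m.+1.
Proof.
rewrite /scan_cost; elim: l => [|k l IH] /=; first by rewrite big_nil.
by move=> /andP [Hk Hl]; rewrite big_cons mulSn leq_add // IH.
Qed.

Lemma sum_le (t : seq (seq nat)) (f : seq nat -> nat) K :
  (forall l, l \in t -> f l <= K) -> \sum_(l <- t) f l <= size t * K.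
Proof.
elim: t => [|l t IH] H; first by rewrite big_nil.
rewrite big_cons /= mulSn leq_add ?H ?mem_head // IH // => l' Hl'.
by apply: H; rewrite in_cons Hl' orbT.
Qed.

Lemma tree_cost (T : finType) (e : rel T) v n :
  \sum_(l <- utree e v) level_cost n l <=
  #|T|.+1 * ((#|T| * #|T|).+1 + n.-1 * ((#|T| * #|T|) * #|T|.+1)).
Proof.
have Hv : size [:: v] <= #|T| * #|T|.
  have : 0 < #|T| by apply/card_gt0P; exists v.
  by case: #|T| => // m _ /=; rewrite mulSn.
have [Hs Ha] := @build_bound T e (#|T| * #|T|) #|T| [:: v] (leqnn _) Hv.
apply: leq_trans (@sum_le _ _ ((#|T| * #|T|).+1 + n.-1 * ((#|T| * #|T|) * #|T|.+1)) _) _.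
  move=> l /(allP Ha) /andP [Hsz Hall].
  rewrite /level_cost; apply: (leq_add (_ : (size l).+1 <= (#|T| * #|T|).+1)); first exact: Hsz.
  rewrite leq_mul2l; apply/orP; right; apply: (leq_trans (scan_le Hall)).
  by rewrite leq_mul2r Hsz orbT.
by rewrite leq_mul2r Hs orbT.
Qed.

Lemma utree_size (T : finType) (e : rel T) v : size (utree e v) <= #|T|.+1.
Proof.
have Hv : size [:: v] <= #|T| * #|T|.
  have : 0 < #|T| by apply/card_gt0P; exists v.
  by case: #|T| => // m _ /=; rewrite mulSn.
by have [Hs _] := @build_bound T e (#|T| * #|T|) #|T| [:: v] (leqnn _) Hv.
Qed.

Definition TC (m n : nat) := m.+1 * ((m * m).+1 + n.-1 * ((m * m) * m.+1)).

Lemma cmp_le (V U : finType) (eG : rel V) (eH : rel U) n v u :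
  #|V| = #|U| ->
  cmp_cost n (utree eG v) (utree eH u) <= 2 * (#|V|.+2) + 2 * TC #|V| n.
Proof.
move=> HVU; rewrite /cmp_cost.
have h1 := utree_size eG v; have h2 := utree_size eH u.
have h3 := tree_cost eG v n; have h4 := tree_cost eH u n.
rewrite -HVU in h2 h4; rewrite /TC; lia.
Qed.

Section Fold.
Variables (V U : finType) (eG : rel V) (eH : rel U).

Lemma inner_fold n v C : (forall u, cmp_cost n (utree eG v) (utree eH u) <= C) ->
  forall s st, (foldl (inner_step eG eH n v) st s).2 <= st.2 + size s * C.+1.
Proof.
move=> HC; elim=> [|u s IH] [[vm mU] c] /=; first by rewrite addn0.
apply: leq_trans (IH _) _.
rewrite /inner_step; have := HC u.
case: ifP => _; last by move=> _ /=; lia.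
by case: ifP => _ /= ?; lia.
Qed.

Lemma outer_fold n C : (forall v u, cmp_cost n (utree eG v) (utree eH u) <= C) ->
  forall s st, (foldl (outer_step eG eH n) st s).2 <= st.2 + size s * (#|U| * C.+1).
Proof.
move=> HC; elim=> [|v s IH] [mU c] /=; first by rewrite addn0.
apply: leq_trans (IH _) _.
rewrite /outer_step.
have := inner_fold (HC v) (enum U) (false, mU, c).
case: (foldl _ _ _) => [[? ?] ?] /=; rewrite -cardE; lia.
Qed.

End Fold.

Lemma poly_bound n : n * (n * (2 * n.+2 + 2 * TC n n).+1) + n + n <= 1408 * n ^ 7 + 1408.
Proof.
rewrite /TC.
set N := n.+1.
have hN : n <= N by rewrite /N.
have hN1 : n.-1 <= N by exact: leq_trans (leq_pred n) hN.
have e1 : (n * n).+1 <= N * N by rewrite /N mulSn mulnS; lia.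
have e2 : n.-1 * (n * n * N) <= N * (N * N * N) by apply: leq_mul => //; apply: leq_mul => //; apply: leq_mul.
have e3 : N * ((n * n).+1 + n.-1 * (n * n * N)) <= N * (N * N + N * (N * N * N)).
  by apply: leq_mul => //; apply: leq_add.
have pN : 0 < N by [].
have e4 : N * (N * N + N * (N * N * N)) <= 2 * N ^ 5.
  have -> : N * (N * N + N * (N * N * N)) = N ^ 3 + N ^ 5 by ring.
  have : N ^ 3 <= N ^ 5 by rewrite leq_pexp2l.
  move: (N ^ 3) (N ^ 5) => a b; lia.
have e5 : n * (n * (2 * n.+2 + 2 * (N * ((n * n).+1 + n.-1 * (n * n * N)))).+1) + n + n
    <= N * (N * (2 * N.+1 + 2 * (2 * N ^ 5)).+1) + N + N.
  apply: leq_add; [apply: leq_add|] => //.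
  apply: leq_mul => //; apply: leq_mul => //; rewrite ltnS; apply: leq_add => //.
  by rewrite leq_mul2l (leq_trans e3 e4).
have e6 : N * (N * (2 * N.+1 + 2 * (2 * N ^ 5)).+1) + N + N <= 11 * N ^ 7.
  have -> : N * (N * (2 * N.+1 + 2 * (2 * N ^ 5)).+1) + N + N
     = 4 * N^7 + 2 * N^3 + 3 * N^2 + 2 * N ^ 1 by ring.
  have h3 : N ^ 3 <= N ^ 7 by rewrite leq_pexp2l.
  have h2 : N ^ 2 <= N ^ 7 by rewrite leq_pexp2l.
  have h1 : N ^ 1 <= N ^ 7 by rewrite leq_pexp2l.
  move: h1 h2 h3; move: (N ^ 1) (N ^ 2) (N ^ 3) (N ^ 7) => a b c d; lia.
have e7 : forall k, k.+1 ^ 7 <= 128 * k ^ 7 + 128.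
  case=> [|m] //.
  have H : m.+2 ^ 7 <= (2 * m.+1) ^ 7 by rewrite leq_exp2r //; lia.
  apply: leq_trans H _.
  by rewrite expnMn leq_addr.
have := e7 n; rewrite -/N => {}e7.
apply: leq_trans e5 _; apply: leq_trans e6 _.
move: e7; move: (N ^ 7) (n ^ 7) => a b; lia.
Qed.

Theorem lemma2 :
  exists c : nat,
    forall (V U : finType) (eG : rel V) (eH : rel U),
      symmetric eG -> irreflexive eG ->
      symmetric eH -> irreflexive eH ->
      forall n : nat, #|V| = n -> #|U| = n ->
      comparison_stage_cost eG eH <= c * n ^ 7 + c.
Proof.
exists 1408 => V U eG eH _ _ _ _ n HV HU.
have HC : forall v u, cmp_cost #|V| (utree eG v) (utree eH u) <= 2 * (#|V|.+2) + 2 * TC #|V| #|V|.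
  by move=> v u; apply: cmp_le; rewrite HV HU.
have := outer_fold HC (enum V) ([::], 0).
rewrite /comparison_stage_cost -cardE /= HV HU add0n => H.
apply: leq_trans (poly_bound n).
by rewrite leq_add2r leq_add2r.
Qed.
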